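(* Let $a,\Theta\in l_0(\mathbb{Z})$ be such that $\Theta^\star=\Theta$, let $n_b$ be a positive integer with $n_b\le\min\{\mathrm{sr}(a),\tfrac12\mathrm{vm}(\mathsf{\Theta}(z)-\mathsf{\Theta}(z^2)\mathsf{a}^\star(z)\mathsf{a}(z))\}$, and let $b=(b_1,b_2)^\top\in (l_0(\mathbb{Z}))^{2\times 1}$. Suppose that $\{a;b_1,b_2\}_{\Theta,(1,-1)}$ is a quasi-tight framelet filter bank such that $\min\{\mathrm{vm}(b_1),\mathrm{vm}(b_2)\}\ge n_b$. Then $$\mathcal{N}_{\mathsf{a},\mathsf{\Theta}|n_b}(z)=\begin{bmatrix}\mathring{\mathsf{b}}^{[0]}(z)&\mathring{\mathsf{b}}^{[1]}(z)\end{bmatrix}^\star\mathrm{diag}(1,-1)\begin{bmatrix}\mathring{\mathsf{b}}^{[0]}(z)&\mathring{\mathsf{b}}^{[1]}(z)\end{bmatrix}$$ holds, where $\mathring{b}\in (l_0(\mathbb{Z}))^{2\times1}$ satisfies $\mathsf{b}(z)=(1-z)^{n_b}\mathring{\mathsf{b}}(z)$. Conversely, suppose that there exists a matrix of Laurent polynomials $\mathsf{V}=\begin{bmatrix}\mathsf{V}_{1,1} &\mathsf{V}_{1,2}\\ \mathsf{V}_{2,1} &\mathsf{V}_{2,2}\end{bmatrix}$ such that $\mathcal{N}_{\mathsf{a},\mathsf{\Theta}|n_b}=\mathsf{V}^{\star}\mathrm{diag}(1,-1)\mathsf{V}$. Define $\mathring{b}$ through $\mathring{\mathsf{b}}^{[0]}:=(\mathsf{V}_{1,1},\mathsf{V}_{2,1})^\top$,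 $\mathring{\mathsf{b}}^{[1]}:=(\mathsf{V}_{1,2},\mathsf{V}_{2,2})^\top$ (i.e. $\mathring{\mathsf{b}}(z)=\mathring{\mathsf{b}}^{[0]}(z^2)+z\mathring{\mathsf{b}}^{[1]}(z^2)$), and define $b$ by $\mathsf{b}(z):=(1-z)^{n_b}\mathring{\mathsf{b}}(z)$. Then $\{a;b_1,b_2\}_{\Theta,(1,-1)}$ is a quasi-tight framelet filter bank such that $\min\{\mathrm{vm}(b_1),\mathrm{vm}(b_2)\}\ge n_b$.
   Context: For a finitely supported filter $u$, $\mathsf{u}(z)=\sum_k u(k)z^k$, $\mathsf{u}^\star(z)=\sum_k\overline{u(k)}^{\top}z^{-k}$, and $u^\star=\overline{u(-\cdot)}^\top$. $\mathrm{vm}(b)$ is the largest $m$ with $(z-1)^m\mid\mathsf{b}(z)$; $\mathrm{sr}(a)$ is the largest $n$ with $(z+1)^n\mid\mathsf{a}(z)$. $\{a;b_1,b_2\}_{\Theta,(1,-1)}$ is a quasi-tight framelet filter bank if for all $z\in\mathbb{C}\setminus\{0\}$: $\mathsf{\Theta}(z^2)\mathsf{a}^\star(z)\mathsf{a}(z)+\mathsf{b}_1^\star(z)\mathsf{b}_1(z)-\mathsf{b}_2^\star(z)\mathsf{b}_2(z)=\mathsf{\Theta}(z)$ and $\mathsf{\Theta}(z^2)\mathsf{a}^\star(z)\mathsf{a}(-z)+\mathsf{b}_1^\star(z)\mathsf{b}_1(-z)-\mathsf{b}_2^\star(z)\mathsf{b}_2(-z)=0$. The $\gamma$-coset sequence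 of $u$ is $u^{[\gamma]}(k)=u(\gamma+2k)$, so $\mathsf{u}(z)=\mathsf{u}^{[0]}(z^2)+z\mathsf{u}^{[1]}(z^2)$. Define the Laurent polynomials $\mathsf{A}(z):=\frac{\mathsf{\Theta}(z)-\mathsf{\Theta}(z^2)\mathsf{a}^\star(z)\mathsf{a}(z)}{(1-z)^{n_b}(1-z^{-1})^{n_b}}$ and $\mathsf{B}(z):=\frac{-\mathsf{\Theta}(z^2)\mathsf{a}^\star(z)\mathsf{a}(-z)}{(1-z^{-1})^{n_b}(1+z)^{n_b}}$, and $$\mathcal{N}_{\mathsf{a},\mathsf{\Theta}|n_b}(z):=\frac12\begin{bmatrix}\mathsf{A}^{[0]}(z)+\mathsf{B}^{[0]}(z)&\mathsf{A}^{[1]}(z)-\mathsf{B}^{[1]}(z)\\ z(\mathsf{A}^{[1]}(z)+\mathsf{B}^{[1]}(z))&\mathsf{A}^{[0]}(z)-\mathsf{B}^{[0]}(z)\end{bmatrix}.$$ *)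

(* Defs.v *)
From HB Require Import structures.
From mathcomp Require Import all_boot all_order all_algebra.
From mathcomp Require Import zify.
Set Implicit Arguments. Unset Strict Implicit. Unset Printing Implicit Defensive.
Import Order.TTheory GRing.Theory Num.Theory.
Local Open Scope ring_scope.

Section LaurentFilters.
Variable C : numClosedFieldType.

Record lpoly := LPoly {
  lcoef : int -> C;
  lbnd : nat;
  lcoefP : forall k : int, (lbnd < `|k|)%N -> lcoef k = 0 }.

Definition lev (u : lpoly) (z : C) : C :=
  \sum_(i < (lbnd u).*2.+1)
     lcoef u (i%:Z - (lbnd u)%:Z) * z ^ (i%:Z - (lbnd u)%:Z).

Definition lstar_ev (u : lpoly) (z : C) : C :=
  \sum_(i < (lbnd u).*2.+1)
     (lcoef u (i%:Z - (lbnd u)%:Z))^* * z ^ (- (i%:Z - (lbnd u)%:Z)).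

Lemma lcoset_bnd (u : lpoly) (g : 'I_2) (j : int) :
  (lbnd u < `|j|)%N -> lcoef u ((nat_of_ord g)%:Z + 2 * j) = 0.
Proof.
move=> hj; apply: lcoefP.
have hg := ltn_ord g.
move: hj hg; set n := lbnd u; set m := nat_of_ord g.
case: j => [p|p] /=; rewrite ?NegzE; lia.
Qed.

Definition lcoset (g : 'I_2) (u : lpoly) : lpoly :=
  @LPoly (fun j => lcoef u ((nat_of_ord g)%:Z + 2 * j)) (lbnd u)
         (@lcoset_bnd u g).

Definition ldvd (f q : C -> C) : Prop :=
  exists c : lpoly, forall z : C, z != 0 -> f z = q z * lev c z.

Definition vm_ge (u : lpoly) (m : nat) : Prop :=
  ldvd (lev u) (fun z => (z - 1) ^+ m).

Definition sr_ge (u : lpoly) (m : nat) : Prop :=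
  ldvd (lev u) (fun z => (z + 1) ^+ m).

Definition selfadj (u : lpoly) : Prop :=
  forall k : int, lcoef u (- k) = (lcoef u k)^*.

Definition qtf (a Th b1 b2 : lpoly) : Prop :=
  forall z : C, z != 0 ->
    lev Th (z ^+ 2) * lstar_ev a z * lev a z
      + lstar_ev b1 z * lev b1 z - lstar_ev b2 z * lev b2 z = lev Th z
 /\ lev Th (z ^+ 2) * lstar_ev a z * lev a (- z)
      + lstar_ev b1 z * lev b1 (- z) - lstar_ev b2 z * lev b2 (- z) = 0.

Definition lmat (M : 'I_2 -> 'I_2 -> lpoly) (z : C) : 'M[C]_2 :=
  \matrix_(i < 2, j < 2) lev (M i j) z.
Definition lmat_star (M : 'I_2 -> 'I_2 -> lpoly) (z : C) : 'M[C]_2 :=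
  \matrix_(i < 2, j < 2) lstar_ev (M j i) z.

Definition D1m1 : 'M[C]_2 :=
  diag_mx (\row_(i < 2) (if i == ord0 then 1 else -1)).

Definition Nmat (A B : lpoly) (z : C) : 'M[C]_2 :=
  let A0 := lev (lcoset ord0 A) z in let A1 := lev (lcoset ord_max A) z in
  let B0 := lev (lcoset ord0 B) z in let B1 := lev (lcoset ord_max B) z in
  2^-1 *: \matrix_(i < 2, j < 2)
     (if i == ord0 then (if j == ord0 then A0 + B0 else A1 - B1)
      else (if j == ord0 then z * (A1 + B1) else A0 - B0)).

End LaurentFilters.

(* Main.v *)
Require Import Defs.
From HB Require Import structures.
From mathcomp Require Import all_boot all_order all_algebra.
From mathcomp Require Import zify ring.
Set Implicit Arguments. Unset Strict Implicit. Unset Printing Implicit Defensive.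
Import Order.TTheory GRing.Theory Num.Theory.
Local Open Scope ring_scope.

Section S.
Variable C : numClosedFieldType.

Definition Sw (f : int -> C) (N : nat) : C :=
  \sum_(i < N.*2.+1) f (i%:Z - N%:Z).

Lemma Sw_rec f N : Sw f N.+1 = f (- (N.+1)%:Z) + Sw f N + f (N.+1)%:Z.
Proof.
rewrite /Sw doubleS big_ord_recl big_ord_recr /= addrA.
congr (_ + _ + _).
- congr f; lia.
- apply: eq_bigr => i _; congr f; rewrite /bump /=; lia.
- congr f; rewrite /bump /=; lia.
Qed.

Lemma Sw_eq f g N : (forall k, f k = g k) -> Sw f N = Sw g N.
Proof. by move=> h; apply: eq_bigr => i _; rewrite h. Qed.

Lemma Sw_scale a f N : Sw (fun k => a * f k) N = a * Sw f N.
Proof. by rewrite /Sw big_distrr. Qed.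

Lemma Sw_ext f M N : (forall k, (M < `|k|)%N -> f k = 0) -> (M <= N)%N ->
  Sw f N = Sw f M.
Proof.
move=> h; elim: N => [|N IH]; first by rewrite leqn0 => /eqP ->.
rewrite leq_eqVlt => /orP [/eqP -> //|]; rewrite ltnS => hMN.
rewrite Sw_rec IH // !h ?addr0 ?add0r //; lia.
Qed.

Lemma Sw_split f N : Sw f N.*2 + f (N.*2.+1)%:Z =
  Sw (fun j => f (2 * j)) N + Sw (fun j => f (1 + 2 * j)) N.
Proof.
elim: N => [|N IH].
  by rewrite /Sw !big_ord1 /=.
rewrite doubleS !Sw_rec.
have e1 : Sw f N.*2 = Sw (fun j => f (2 * j)) N + Sw (fun j => f (1 + 2 * j)) N
   - f (N.*2.+1)%:Z by rewrite -IH addrK.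
rewrite e1.
have -> : f (- (N.*2.+2)%:Z) = f (2 * - (N.+1)%:Z) by congr f; lia.
have -> : f (N.*2.+2)%:Z = f (2 * (N.+1)%:Z) by congr f; lia.
have -> : f (- (N.*2.+1)%:Z) = f (1 + 2 * - (N.+1)%:Z) by congr f; lia.
have -> : f (N.*2.+3)%:Z = f (1 + 2 * (N.+1)%:Z) by congr f; lia.
ring.
Qed.

Lemma lev_Sw (u : lpoly C) z N : (lbnd u <= N)%N ->
  lev u z = Sw (fun k => lcoef u k * z ^ k) N.
Proof.
move=> h; rewrite (@Sw_ext _ (lbnd u)) // => k hk.
by rewrite lcoefP // mul0r.
Qed.

Lemma lstar_Sw (u : lpoly C) z N : (lbnd u <= N)%N ->
  lstar_ev u z = Sw (fun k => (lcoef u k)^* * z ^ (- k)) N.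
Proof.
move=> h; rewrite (@Sw_ext _ (lbnd u)) // => k hk.
by rewrite lcoefP // conjC0 mul0r.
Qed.

Lemma expz2 (w : C) j : (w ^+ 2) ^ j = w ^ (2 * j).
Proof. by rewrite -exprz_exp. Qed.

Lemma lev_coset (u u0 u1 : lpoly C) w : w != 0 ->
  (forall j, lcoef u0 j = lcoef u (2 * j)) ->
  (forall j, lcoef u1 j = lcoef u (1 + 2 * j)) ->
  lev u w = lev u0 (w ^+ 2) + w * lev u1 (w ^+ 2).
Proof.
move=> hw h0 h1.
set M := maxn (lbnd u) (maxn (lbnd u0) (lbnd u1)).
rewrite (@lev_Sw u _ M.*2); last by rewrite /M; lia.
rewrite (@lev_Sw u0 _ M); last by rewrite /M; lia.
rewrite (@lev_Sw u1 _ M); last by rewrite /M; lia.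
rewrite -[LHS]addr0 -[X in _ + X = _](mul0r (w ^ (M.*2.+1)%:Z)).
rewrite -(@lcoefP _ u (M.*2.+1)%:Z); last by rewrite /M; lia.
rewrite (Sw_split (fun k => lcoef u k * w ^ k)) -Sw_scale.
congr (_ + _); apply: Sw_eq => j.
  by rewrite h0 expz2.
rewrite h1 expz2 expfzDr // expr1z; ring.
Qed.

Lemma lstar_coset (u u0 u1 : lpoly C) w : w != 0 ->
  (forall j, lcoef u0 j = lcoef u (2 * j)) ->
  (forall j, lcoef u1 j = lcoef u (1 + 2 * j)) ->
  lstar_ev u w = lstar_ev u0 (w ^+ 2) + w^-1 * lstar_ev u1 (w ^+ 2).
Proof.
move=> hw h0 h1.
set M := maxn (lbnd u) (maxn (lbnd u0) (lbnd u1)).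
rewrite (@lstar_Sw u _ M.*2); last by rewrite /M; lia.
rewrite (@lstar_Sw u0 _ M); last by rewrite /M; lia.
rewrite (@lstar_Sw u1 _ M); last by rewrite /M; lia.
rewrite -[LHS]addr0 -[X in _ + X = _](mul0r (w ^ (- (M.*2.+1)%:Z))).
rewrite -(@conjC0 C) -(@lcoefP _ u (M.*2.+1)%:Z); last by rewrite /M; lia.
rewrite (Sw_split (fun k => (lcoef u k)^* * w ^ (- k))) -Sw_scale.
congr (_ + _); apply: Sw_eq => j.
  by rewrite h0 expz2 mulrN.
rewrite h1 expz2 opprD expfzDr // exprN1 mulrN; ring.
Qed.

Lemma conj_expz (x : C) (k : int) : (x ^ k)^* = (x^*) ^ k.
Proof. by case: k => n /=; rewrite ?fmorphV rmorphXn. Qed.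

Lemma lstar_conj (u : lpoly C) z : lstar_ev u z = (lev u (z^-1)^*)^*.
Proof.
rewrite /lstar_ev /lev rmorph_sum; apply: eq_bigr => i _.
rewrite rmorphM /=; congr (_ * _); rewrite -exprz_inv -{1}(conjCK z^-1); exact: (esym (conj_expz _ _)).
Qed.

Lemma lstar_fact (u v : lpoly C) (g : C -> C) :
  (forall z, z != 0 -> lev u z = g z * lev v z) ->
  forall z, z != 0 -> lstar_ev u z = (g (z^-1)^*)^* * lstar_ev v z.
Proof.
move=> h z hz; rewrite !lstar_conj h ?rmorphM //.
by rewrite conjC_eq0 invr_eq0.
Qed.

Lemma poly_all0 (q : {poly C}) : (forall z, q.[z] = 0) -> q = 0.
Proof.
move=> h; apply/eqP; apply/negPn/negP => hq.
set rs := [seq i%:R | i <- iota 0 (size q)] : seq C.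
have H1 : all (root q) rs by apply/allP => x _; rewrite /root h.
have H2 : uniq rs by rewrite (map_inj_uniq (mulrIn (@oner_neq0 C))) iota_uniq.
by move: (max_poly_roots hq H1 H2); rewrite size_map size_iota ltnn.
Qed.

Definition laur (f : C -> C) := exists (p : {poly C}) (n : nat),
  forall z, z != 0 -> f z = p.[z] / z ^+ n.

Lemma laurC c : laur (fun _ => c).
Proof. by exists c%:P, 0%N => z _; rewrite hornerC expr0 divr1. Qed.

Lemma laurD f g : laur f -> laur g -> laur (fun z => f z + g z).
Proof.
move=> [p [n hp]] [q [m hq]]; exists (p * 'X^m + q * 'X^n), (n + m)%N => z hz.
rewrite hp // hq // !hornerE exprD.
have hn : z ^+ n != 0 by rewrite expf_neq0.
have hm : z ^+ m != 0 by rewrite expf_neq0.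
by field; rewrite hn hm.
Qed.

Lemma laurM f g : laur f -> laur g -> laur (fun z => f z * g z).
Proof.
move=> [p [n hp]] [q [m hq]]; exists (p * q), (n + m)%N => z hz.
rewrite hp // hq // hornerM exprD.
have hn : z ^+ n != 0 by rewrite expf_neq0.
have hm : z ^+ m != 0 by rewrite expf_neq0.
by field; rewrite hn hm.
Qed.

Lemma laurN f : laur f -> laur (fun z => - f z).
Proof.
move=> [p [n hp]]; exists (- p), n => z hz.
by rewrite hp // hornerN mulNr.
Qed.

Lemma laurB f g : laur f -> laur g -> laur (fun z => f z - g z).
Proof. by move=> hf hg; apply: laurD => //; apply: laurN. Qed.

Lemma laur_neg f : laur f -> laur (fun z => f (- z)).
Proof.
move=> [p [n hp]]; exists (((-1) ^+ n) *: (p \Po (- 'X))), n => z hz.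
rewrite hp ?oppr_eq0 // hornerZ horner_comp hornerN hornerX [(- z) ^+ n]exprNn.
rewrite invfM -exprVn invrN1; ring.
Qed.

Lemma laur_eq f g : (forall z, f z = g z) -> laur f -> laur g.
Proof. by move=> e [p [n hp]]; exists p, n => z hz; rewrite -e hp. Qed.

Lemma laur_sum m (F : 'I_m -> C -> C) : (forall i, laur (F i)) ->
  laur (fun z => \sum_(i < m) F i z).
Proof.
elim: m F => [|m IH] F hF.
  by apply: (laur_eq _ (laurC 0)) => z; rewrite big_ord0.
apply: (laur_eq (f := fun z => \sum_(i < m) F (widen_ord (leqnSn m) i) z + F ord_max z)).
  by move=> z; rewrite big_ord_recr.
by apply: laurD => //; apply: (IH (fun i => F (widen_ord (leqnSn m) i))).
Qed.

Lemma laur_mono c (k : int) : laur (fun z => c * z ^ k).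
Proof.
case: k => n.
  by exists (c *: 'X^n), 0%N => z _; rewrite hornerZ hornerXn expr0 divr1.
by exists c%:P, n.+1 => z _; rewrite hornerC.
Qed.

Lemma laur_lev (u : lpoly C) : laur (lev u).
Proof.
apply: laur_sum => i; exact: laur_mono.
Qed.

Lemma laur_lstar (u : lpoly C) : laur (lstar_ev u).
Proof.
apply: laur_sum => i; exact: laur_mono.
Qed.

Lemma laur_ext f : laur f ->
  (forall z, z != 0 -> z != 1 -> z != -1 -> f z = 0) -> forall z, z != 0 -> f z = 0.
Proof.
move=> [p [n hp]] h.
set q := p * ('X - 1%:P) * ('X - (-1)%:P) * 'X.
have q0 : q = 0.
  apply: poly_all0 => z; rewrite /q !hornerM !hornerXsubC hornerX.
  have [->|z0] := eqVneq z 0; first by rewrite mulr0.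
  have [->|z1] := eqVneq z 1; first by rewrite subrr; ring.
  have [->|z2] := eqVneq z (-1); first by rewrite subrr; ring.
  have := h z z0 z1 z2; rewrite hp //.
  move/eqP; rewrite mulf_eq0 invr_eq0 expf_eq0 (negbTE z0) andbF orbF => /eqP ->.
  by rewrite !mul0r.
have p0 : p = 0.
  move: q0; rewrite /q; move/eqP; rewrite !mulf_eq0 polyX_eq0 !polyXsubC_eq0 ?orbF.
  by move/eqP.
by move=> z hz; rewrite hp // p0 horner0 mul0r.
Qed.

Definition ilc (u0 u1 : lpoly C) (k : int) : C :=
  if (k %% 2 == 0)%Z then lcoef u0 (k %/ 2)%Z else lcoef u1 (k %/ 2)%Z.

Lemma ilcP u0 u1 k : ((maxn (lbnd u0) (lbnd u1)).*2.+1 < `|k|)%N -> ilc u0 u1 k = 0.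
Proof. by move=> h; rewrite /ilc; case: ifP => _; apply: lcoefP; lia. Qed.

Definition ileave u0 u1 := LPoly (@ilcP u0 u1).

Lemma ileave0 u0 u1 j : lcoef u0 j = lcoef (ileave u0 u1) (2 * j).
Proof.
rewrite /= /ilc; have -> : ((2 * j) %% 2)%Z = 0 by lia.
by rewrite eqxx; congr lcoef; lia.
Qed.

Lemma ileave1 u0 u1 j : lcoef u1 j = lcoef (ileave u0 u1) (1 + 2 * j).
Proof.
rewrite /= /ilc; have -> : ((1 + 2 * j) %% 2)%Z = 1 by lia.
by congr lcoef; lia.
Qed.

Lemma coset0 (u : lpoly C) j : lcoef (lcoset ord0 u) j = lcoef u (2 * j).
Proof. by rewrite /= add0r. Qed.

Lemma coset1 (u : lpoly C) j : lcoef (lcoset ord_max u) j = lcoef u (1 + 2 * j).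
Proof. by []. Qed.

Lemma lscaleP (a : C) (u : lpoly C) k : (lbnd u < `|k|)%N -> a * lcoef u k = 0.
Proof. by move=> h; rewrite lcoefP // mulr0. Qed.

Definition lscale a u := LPoly (@lscaleP a u).

Lemma lev_scale a u z : lev (lscale a u) z = a * lev u z.
Proof. by rewrite /lev big_distrr; apply: eq_bigr => i _ /=; rewrite mulrA. Qed.

Lemma alg1 (z A0 A1 B0 B1 p00 p01 p10 p11 : C) : z != 0 ->
  2^-1 * (A0 + B0) = p00 -> 2^-1 * (A1 - B1) = p01 ->
  2^-1 * (z ^+ 2 * (A1 + B1)) = p10 -> 2^-1 * (A0 - B0) = p11 ->
  A0 + z * A1 = p00 + z * p01 + z^-1 * p10 + p11 /\
  B0 + z * B1 = p00 - z * p01 + z^-1 * p10 - p11.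
Proof.
move=> hz <- <- <- <-.
have h2 : (2 : C) != 0 by rewrite pnatr_eq0.
by split; field; rewrite ?hz ?h2.
Qed.

Lemma alg2 (w A0 A1 B0 B1 p00 p01 p10 p11 : C) : w != 0 ->
  A0 + w * A1 = p00 + w * p01 + w^-1 * p10 + p11 ->
  A0 - w * A1 = p00 - w * p01 - w^-1 * p10 + p11 ->
  B0 + w * B1 = p00 - w * p01 + w^-1 * p10 - p11 ->
  B0 - w * B1 = p00 + w * p01 - w^-1 * p10 - p11 ->
  [/\ 2^-1 * (A0 + B0) = p00, 2^-1 * (A1 - B1) = p01,
      2^-1 * (w ^+ 2 * (A1 + B1)) = p10 & 2^-1 * (A0 - B0) = p11].
Proof.
move=> hw e1 e2 e3 e4.
have h2 : (2 : C) != 0 by rewrite pnatr_eq0.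
have hA0 : A0 = ((p00 + w * p01 + w^-1 * p10 + p11) + (p00 - w * p01 - w^-1 * p10 + p11)) / 2.
  by rewrite -e1 -e2; field; rewrite ?h2 ?hw.
have hA1 : A1 = ((p00 + w * p01 + w^-1 * p10 + p11) - (p00 - w * p01 - w^-1 * p10 + p11)) / (2 * w).
  by rewrite -e1 -e2; field; rewrite ?h2 ?hw.
have hB0 : B0 = ((p00 - w * p01 + w^-1 * p10 - p11) + (p00 + w * p01 - w^-1 * p10 - p11)) / 2.
  by rewrite -e3 -e4; field; rewrite ?h2 ?hw.
have hB1 : B1 = ((p00 - w * p01 + w^-1 * p10 - p11) - (p00 + w * p01 - w^-1 * p10 - p11)) / (2 * w).
  by rewrite -e3 -e4; field; rewrite ?h2 ?hw.
rewrite hA0 hA1 hB0 hB1; split; field; by rewrite ?h2 ?hw.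
Qed.

Lemma prodE (V : 'I_2 -> 'I_2 -> lpoly C) z i j :
  (lmat_star V z *m D1m1 C *m lmat V z) i j =
  lstar_ev (V ord0 i) z * lev (V ord0 j) z - lstar_ev (V ord_max i) z * lev (V ord_max j) z.
Proof.
rewrite !mxE !big_ord_recr !big_ord0 /= !add0r !mxE !big_ord_recr !big_ord0 /= !add0r.
rewrite /D1m1 !mxE /=.
have -> : widen_ord (leqnSn 1) ord_max = ord0 :> 'I_2 by apply/val_inj.
rewrite mulr0n mulr1n; ring.
Qed.

Lemma NmatE (A B : lpoly C) z i j : Nmat A B z i j =
  2^-1 * (if i == ord0 then (if j == ord0 then lev (lcoset ord0 A) z + lev (lcoset ord0 B) z
                              else lev (lcoset ord_max A) z - lev (lcoset ord_max B) z)
          else (if j == ord0 then z * (lev (lcoset ord_max A) z + lev (lcoset ord_max B) z)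
                else lev (lcoset ord0 A) z - lev (lcoset ord0 B) z)).
Proof. by rewrite /Nmat !mxE. Qed.

Lemma lin1 (T P KA S1 S2 : C) : T - P = KA -> P + S1 - S2 = T -> KA - (S1 - S2) = 0.
Proof. by move=> <- <-; ring. Qed.

Lemma lin2 (P KB S1 S2 : C) : - P = KB -> P + S1 - S2 = 0 -> KB - (S1 - S2) = 0.
Proof. by move=> <- e; rewrite -[RHS]oppr0 -e; ring. Qed.

Lemma eq_from (x y u v : C) : u = v -> x - y = v - u -> x = y.
Proof. by move=> -> h; apply/eqP; rewrite -subr_eq0 h subrr. Qed.

Lemma ord2_cases (i : 'I_2) : i = ord0 \/ i = ord_max.
Proof. by case: i => [[|[|//]] hi]; [left|right]; apply/val_inj. Qed.

Lemma conj_fact nb (z : C) : ((1 - (z^-1)^*) ^+ nb)^* = (1 - z^-1) ^+ nb.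
Proof. by rewrite rmorphXn rmorphB rmorph1; congr (_ ^+ _); congr (_ - _); apply: conjCK. Qed.

Lemma oneBz_neq0 (z : C) : z != 0 -> z != 1 -> 1 - z^-1 != 0.
Proof.
move=> hz h1; rewrite subr_eq0 eq_sym; apply/negP => /eqP h.
by move/negP: h1; apply; rewrite -[z]invrK h invr1.
Qed.

Lemma oneB_neq0 (z : C) : z != 1 -> 1 - z != 0.
Proof. by rewrite subr_eq0 eq_sym. Qed.

Lemma oneD_neq0 (z : C) : z != -1 -> 1 + z != 0.
Proof. by rewrite addrC addr_eq0. Qed.

Lemma lin3 (T P KA S1 S2 : C) : T - P = KA -> KA = S1 - S2 -> P + S1 - S2 = T.
Proof. by move=> e1 e2; rewrite -addrA -e2 -e1; ring. Qed.

Lemma lin4 (P KB S1 S2 : C) : - P = KB -> KB = S1 - S2 -> P + S1 - S2 = 0.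
Proof. by move=> e1 e2; rewrite -addrA -e2 -e1; ring. Qed.

End S.

Theorem theorem4p1 (C : numClosedFieldType) (a Th : lpoly C) (nb : nat)
  (hnb : (0 < nb)%N)
  (hTh : selfadj Th)
  (hsr : sr_ge a nb)
  (hvm : ldvd (fun z => lev Th z - lev Th (z ^+ 2) * lstar_ev a z * lev a z)
              (fun z => (z - 1) ^+ (2 * nb)))
  (A B : lpoly C)
  (hA : forall z : C, z != 0 ->
     lev Th z - lev Th (z ^+ 2) * lstar_ev a z * lev a z
       = (1 - z) ^+ nb * (1 - z^-1) ^+ nb * lev A z)
  (hB : forall z : C, z != 0 ->
     - (lev Th (z ^+ 2) * lstar_ev a z * lev a (- z))
       = (1 - z^-1) ^+ nb * (1 + z) ^+ nb * lev B z) :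
  (forall b : 'I_2 -> lpoly C,
     qtf a Th (b ord0) (b ord_max) ->
     vm_ge (b ord0) nb -> vm_ge (b ord_max) nb ->
     forall bo : 'I_2 -> lpoly C,
       (forall (i : 'I_2) (z : C), z != 0 -> lev (b i) z = (1 - z) ^+ nb * lev (bo i) z) ->
       forall z : C, z != 0 ->
         Nmat A B z
           = lmat_star (fun i j => lcoset j (bo i)) z *m D1m1 C
               *m lmat (fun i j => lcoset j (bo i)) z)
  /\
  (forall V : 'I_2 -> 'I_2 -> lpoly C,
     (forall z : C, z != 0 -> Nmat A B z = lmat_star V z *m D1m1 C *m lmat V z) ->
     forall b : 'I_2 -> lpoly C,
       (forall (i : 'I_2) (z : C), z != 0 ->
          lev (b i) z = (1 - z) ^+ nb
                        * (lev (V i ord0) (z ^+ 2) + z * lev (V i ord_max) (z ^+ 2))) ->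
       qtf a Th (b ord0) (b ord_max) /\ vm_ge (b ord0) nb /\ vm_ge (b ord_max) nb).
Proof.
split.
- move=> b hq _ _ bo hbo.
  have hbs : forall i z, z != 0 -> lstar_ev (b i) z = (1 - z^-1) ^+ nb * lstar_ev (bo i) z.
    move=> i z hz; rewrite (lstar_fact (hbo i)) // conj_fact //.
  have kA : forall z, z != 0 -> lev A z - (lstar_ev (bo ord0) z * lev (bo ord0) z
                  - lstar_ev (bo ord_max) z * lev (bo ord_max) z) = 0.
    apply: laur_ext.
      apply: laurB; first exact: laur_lev.
      by apply: laurB; apply: laurM; (exact: laur_lev || exact: laur_lstar).
    move=> z hz h1 h2.
    have [q1 _] := hq z hz.
    rewrite !hbs // !hbo // in q1.
    have h0 := lin1 (hA z hz) q1.
    have : ((1 - z) ^+ nb * (1 - z^-1) ^+ nb) * (lev A z - (lstar_ev (bo ord0) z * lev (bo ord0) z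
                  - lstar_ev (bo ord_max) z * lev (bo ord_max) z)) = 0.
      by rewrite -h0; ring.
    move/eqP; rewrite !mulf_eq0 !expf_eq0 (negbTE (oneB_neq0 h1)) (negbTE (oneBz_neq0 hz h1)).
    by rewrite !andbF /= => /eqP.
  have kB : forall z, z != 0 -> lev B z - (lstar_ev (bo ord0) z * lev (bo ord0) (- z)
                  - lstar_ev (bo ord_max) z * lev (bo ord_max) (- z)) = 0.
    apply: laur_ext.
      apply: laurB; first exact: laur_lev.
      by apply: laurB; apply: laurM; (exact: laur_lstar || exact: (laur_neg (laur_lev _))).
    move=> z hz h1 h2.
    have [_ q2] := hq z hz.
    have hnz : - z != 0 by rewrite oppr_eq0.
    rewrite !hbs // !hbo // opprK in q2.
    have h0 := lin2 (hB z hz) q2.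
    have : ((1 - z^-1) ^+ nb * (1 + z) ^+ nb) * (lev B z - (lstar_ev (bo ord0) z * lev (bo ord0) (- z)
                  - lstar_ev (bo ord_max) z * lev (bo ord_max) (- z))) = 0.
      by rewrite -h0; ring.
    move/eqP; rewrite !mulf_eq0 !expf_eq0 (negbTE (oneD_neq0 h2)) (negbTE (oneBz_neq0 hz h1)).
    by rewrite !andbF /= => /eqP.
  move=> z hz.
  have [w hw wz] : exists2 w : C, w != 0 & z = w ^+ 2.
    exists (sqrtC z); last by rewrite sqrtCK.
    by rewrite sqrtC_eq0.
  subst z.
  have hnw : - w != 0 by rewrite oppr_eq0.
  have eA : forall x, x != 0 -> lev A x = lev (lcoset ord0 A) (x ^+ 2) + x * lev (lcoset ord_max A) (x ^+ 2).
    by move=> x hx; apply: lev_coset => // j; rewrite ?coset0 ?coset1.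
  have eB : forall x, x != 0 -> lev B x = lev (lcoset ord0 B) (x ^+ 2) + x * lev (lcoset ord_max B) (x ^+ 2).
    by move=> x hx; apply: lev_coset => // j; rewrite ?coset0 ?coset1.
  have eb : forall i x, x != 0 -> lev (bo i) x = lev (lcoset ord0 (bo i)) (x ^+ 2) + x * lev (lcoset ord_max (bo i)) (x ^+ 2).
    by move=> i x hx; apply: lev_coset => // j; rewrite ?coset0 ?coset1.
  have es : forall i x, x != 0 -> lstar_ev (bo i) x = lstar_ev (lcoset ord0 (bo i)) (x ^+ 2) + x^-1 * lstar_ev (lcoset ord_max (bo i)) (x ^+ 2).
    by move=> i x hx; apply: lstar_coset => // j; rewrite ?coset0 ?coset1.
  have a1 := kA w hw; have a2 := kA (- w) hnw.
  have b1 := kB w hw; have b2 := kB (- w) hnw.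
  rewrite eA // !eb // !es // in a1.
  rewrite eA // !eb // !es // sqrrN in a2.
  rewrite eB // !eb ?oppr_eq0 // !es // sqrrN in b1.
  rewrite opprK eB // !eb // !es // sqrrN in b2.
  rewrite !invrN in a2 b2.
  set p := fun j k => lstar_ev (lcoset j (bo ord0)) (w ^+ 2) * lev (lcoset k (bo ord0)) (w ^+ 2)
                   - lstar_ev (lcoset j (bo ord_max)) (w ^+ 2) * lev (lcoset k (bo ord_max)) (w ^+ 2).
  have e1 : lev (lcoset ord0 A) (w ^+ 2) + w * lev (lcoset ord_max A) (w ^+ 2)
     = p ord0 ord0 + w * p ord0 ord_max + w^-1 * p ord_max ord0 + p ord_max ord_max.
    by apply/eqP; rewrite -subr_eq0; apply/eqP; rewrite -[RHS]a1 /p /=; field.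
  have e2 : lev (lcoset ord0 A) (w ^+ 2) - w * lev (lcoset ord_max A) (w ^+ 2)
     = p ord0 ord0 - w * p ord0 ord_max - w^-1 * p ord_max ord0 + p ord_max ord_max.
    by apply/eqP; rewrite -subr_eq0; apply/eqP; rewrite -[RHS]a2 /p /=; field.
  have e3 : lev (lcoset ord0 B) (w ^+ 2) + w * lev (lcoset ord_max B) (w ^+ 2)
     = p ord0 ord0 - w * p ord0 ord_max + w^-1 * p ord_max ord0 - p ord_max ord_max.
    by apply/eqP; rewrite -subr_eq0; apply/eqP; rewrite -[RHS]b1 /p /=; field.
  have e4 : lev (lcoset ord0 B) (w ^+ 2) - w * lev (lcoset ord_max B) (w ^+ 2)
     = p ord0 ord0 + w * p ord0 ord_max - w^-1 * p ord_max ord0 - p ord_max ord_max.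
    by apply/eqP; rewrite -subr_eq0; apply/eqP; rewrite -[RHS]b2 /p /=; field.
  have [r00 r01 r10 r11] := alg2 hw e1 e2 e3 e4.
  apply/matrixP => i j; rewrite NmatE prodE /=.
  by case: (ord2_cases i) => ->; case: (ord2_cases j) => ->.
- move=> V hV b hb.
  pose bo := fun i => ileave (V i ord0) (V i ord_max).
  have hbo : forall i z, z != 0 ->
      lev (bo i) z = lev (V i ord0) (z ^+ 2) + z * lev (V i ord_max) (z ^+ 2).
    by move=> i z hz; apply: lev_coset => //; first [exact: ileave0 | exact: ileave1].
  have hbs : forall i z, z != 0 ->
      lstar_ev (bo i) z = lstar_ev (V i ord0) (z ^+ 2) + z^-1 * lstar_ev (V i ord_max) (z ^+ 2).
    by move=> i z hz; apply: lstar_coset => //; first [exact: ileave0 | exact: ileave1].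
  have hb' : forall i z, z != 0 -> lev (b i) z = (1 - z) ^+ nb * lev (bo i) z.
    by move=> i z hz; rewrite hb // hbo.
  have hbst : forall i z, z != 0 -> lstar_ev (b i) z = (1 - z^-1) ^+ nb * lstar_ev (bo i) z.
    by move=> i z hz; rewrite (lstar_fact (hb' i)) // conj_fact.
  have key : forall z, z != 0 ->
      lev A z = lstar_ev (bo ord0) z * lev (bo ord0) z - lstar_ev (bo ord_max) z * lev (bo ord_max) z
   /\ lev B z = lstar_ev (bo ord0) z * lev (bo ord0) (- z) - lstar_ev (bo ord_max) z * lev (bo ord_max) (- z).
    move=> z hz.
    have hx : z ^+ 2 != 0 by rewrite expf_neq0.
    have hnz : - z != 0 by rewrite oppr_eq0.
    have hN := hV _ hx.
    have q := fun i j => congr1 (fun M : 'M[C]_2 => M i j) hN.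
    have q00 := q ord0 ord0; have q01 := q ord0 ord_max.
    have q10 := q ord_max ord0; have q11 := q ord_max ord_max.
    rewrite /= !NmatE !prodE /= in q00 q01 q10 q11.
    have [eA eB] := alg1 hz q00 q01 q10 q11.
    rewrite !hbs // !hbo // sqrrN.
    rewrite (@lev_coset _ A (lcoset ord0 A) (lcoset ord_max A)) //; last by move=> j; rewrite coset0.
    rewrite (@lev_coset _ B (lcoset ord0 B) (lcoset ord_max B)) //; last by move=> j; rewrite coset0.
    rewrite eA eB; split; field; by rewrite ?hz.
  split.
    move=> z hz; have hnz : - z != 0 by rewrite oppr_eq0.
    have [kA kB] := key z hz.
    split.
      rewrite !hbst // !hb' //.
      have := hA z hz; rewrite kA => e.
      by apply: (lin3 e); ring.
    rewrite !hbst // !hb' // opprK.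
    have := hB z hz; rewrite kB => e.
    by apply: (lin4 e); ring.
  have vm : forall i, vm_ge (b i) nb.
    move=> i; exists (lscale ((-1) ^+ nb) (bo i)) => z hz.
    rewrite lev_scale hb' // mulrA -exprMn; congr (_ ^+ _ * _); ring.
  by split; apply: vm.
Qed.
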